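(* For every $\varepsilon>0$ there is a constant $C_\varepsilon$ such that for all positive integers $n$ and all $D\ge0$, the number of pairs $(m,M)$ that are height profiles of some sum-free subset of $\Lambda(R\cup L)$ meeting every fiber and have discrepancy $D$ is at most $2^{\varepsilon D+C_\varepsilon n}$.
   Context: Sum-free: no $a,b,c$ (not necessarily distinct) with $a+b=c$, coordinatewise addition in $\mathbb{Z}^2$. $\Lambda(X)=\mathbb{Z}^2\cap X$. $R=\{(x,y):0.7n\le x+y\le n,\ |x-y|\le0.8n\}$, $L=\{(x,y):2\lceil0.7n\rceil\le x+y\le1.7n,\ |x-y|\le0.4n\}$, $w=\lfloor0.4n\rfloor$. Fibers $R_i=\{(x,y)\in\Lambda(R):x-y=i\}$ ($|i|\le2w$), $L_k=\{(x,y)\in\Lambda(L):x-y=k\}$ ($|k|\le w$). Height $h(x,y)=\lfloor(x+y-\lceil0.7n\rceil)/2\rfloor$ on $R$ and $\lfloor(x+y-2\lceil0.7n\rceil)/2\rfloor$ on $L$. For sum-free $S\subseteq\Lambda(R\cup L)$ meeting every fiber, its height profile is $(m,M)$ with $m(i)=\min h(S\cap R_i)$, $M(k)=\max h(S\cap L_k)$. Let $\mathcal{T}=\{(-t,2t,t):t\in[w]\}\cup\{(-w-t,2t-1,-w-1+t):t\in[w]\}$. For $s\in\{-1,0,1\}$ and $(i,j,k)\in\mathcal{T}$ set $d_s(i)=M(k+s)-m(j+s)-m(i)$ (taken to be $0$ when some index is outside the domain of $m$ or $M$), $D_s=\sum_{(i,j,k)\in\mathcal{T}}|d_s(i)|$,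 and the discrepancy is $D=\max\{D_{-1},D_0,D_1\}$. *)

(* Defs.v *)
From Stdlib Require Import ZArith Reals List Bool.
Open Scope Z_scope.
Open Scope bool_scope.

Definition pt := (Z * Z)%type.

(* c = ceil(0.7 n), w = floor(0.4 n), for n >= 0 *)
Definition cc (n : nat) : Z := (7 * Z.of_nat n + 9) / 10.
Definition ww (n : nat) : Z := (4 * Z.of_nat n) / 10.

Definition inR (n : nat) (p : pt) : Prop :=
  7 * Z.of_nat n <= 10 * (fst p + snd p) /\ fst p + snd p <= Z.of_nat n /\
  10 * Z.abs (fst p - snd p) <= 8 * Z.of_nat n.

Definition inL (n : nat) (p : pt) : Prop :=
  2 * cc n <= fst p + snd p /\ 10 * (fst p + snd p) <= 17 * Z.of_nat n /\
  10 * Z.abs (fst p - snd p) <= 4 * Z.of_nat n.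

(* heights (Z.div is floor division for positive divisor) *)
Definition hR (n : nat) (p : pt) : Z := (fst p + snd p - cc n) / 2.
Definition hL (n : nat) (p : pt) : Z := (fst p + snd p - 2 * cc n) / 2.

Definition sum_free (S : pt -> Prop) : Prop :=
  forall a b c, S a -> S b -> S c ->
    ~ (fst a + fst b = fst c /\ snd a + snd b = snd c).

Definition admissible (n : nat) (S : pt -> Prop) : Prop :=
  (forall p, S p -> inR n p \/ inL n p) /\ sum_free S /\
  (forall i, Z.abs i <= 2 * ww n -> exists p, S p /\ inR n p /\ fst p - snd p = i) /\
  (forall k, Z.abs k <= ww n -> exists p, S p /\ inL n p /\ fst p - snd p = k).

(* (m, M) is the height profile of S.  m is defined on [-2w,2w], M on [-w,w];
   they are encoded as functions Z -> Z that vanish outside their domains. *)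
Definition height_profile (n : nat) (S : pt -> Prop) (m M : Z -> Z) : Prop :=
  (forall i, Z.abs i <= 2 * ww n ->
     (exists p, S p /\ inR n p /\ fst p - snd p = i /\ hR n p = m i) /\
     (forall p, S p -> inR n p -> fst p - snd p = i -> m i <= hR n p)) /\
  (forall k, Z.abs k <= ww n ->
     (exists p, S p /\ inL n p /\ fst p - snd p = k /\ hL n p = M k) /\
     (forall p, S p -> inL n p -> fst p - snd p = k -> hL n p <= M k)) /\
  (forall i, 2 * ww n < Z.abs i -> m i = 0) /\
  (forall k, ww n < Z.abs k -> M k = 0).

Definition in_dom_m (n : nat) (i : Z) : bool := Z.abs i <=? 2 * ww n.
Definition in_dom_M (n : nat) (k : Z) : bool := Z.abs k <=? ww n.

Definition dval (n : nat) (m M : Z -> Z) (s i j k : Z) : Z :=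
  if in_dom_m n i && in_dom_m n (j + s) && in_dom_M n (k + s)
  then M (k + s) - m (j + s) - m i else 0.

(* D_s = sum over T of |d_s(i)|, T = {(-t,2t,t)} u {(-w-t,2t-1,-w-1+t)}, t in [w];
   the two families are disjoint (their first coordinates differ). *)
Definition Dsum (n : nat) (m M : Z -> Z) (s : Z) : Z :=
  fold_right Z.add 0
    (map (fun t : nat =>
            let t := Z.of_nat t in
            Z.abs (dval n m M s (- t) (2 * t) t) +
            Z.abs (dval n m M s (- ww n - t) (2 * t - 1) (- ww n - 1 + t)))
         (seq 1 (Z.to_nat (ww n)))).

Definition discrepancy (n : nat) (m M : Z -> Z) : Z :=
  Z.max (Dsum n m M (-1)) (Z.max (Dsum n m M 0) (Dsum n m M 1)).

Definition profile_with_disc (n : nat) (D : nat) (mM : (Z -> Z) * (Z -> Z)) : Prop :=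
  (exists S, admissible n S /\ height_profile n S (fst mM) (snd mM)) /\
  discrepancy n (fst mM) (snd mM) = Z.of_nat D.

(* Main.v *)
Require Import Defs.
From Stdlib Require Import ZArith Reals List Lia Lra FunctionalExtensionality.
Import ListNotations.

Open Scope R_scope.

Definition sumR {A} (f : A -> R) (l : list A) : R := fold_right (fun a s => f a + s) 0 l.
Definition wt (v : list Z) : nat := fold_right (fun a s => (Z.abs_nat a + s)%nat) 0%nat v.
Definition rng (B : nat) : list Z :=
  map Z.of_nat (seq 0 (S B)) ++ map (fun k => - Z.of_nat (S k))%Z (seq 0 B).
Fixpoint boxes (B N : nat) : list (list Z) :=
  match N with O => [[]] | S N' => flat_map (fun a => map (cons a) (boxes B N')) (rng B) end.

Lemma sumR_app {A} f (l1 l2 : list A) : sumR f (l1 ++ l2) = sumR f l1 + sumR f l2.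
Proof. induction l1; simpl; [lra|]. rewrite IHl1; lra. Qed.

Lemma sumR_flat_map {A B} (f : B -> R) (g : A -> list B) l :
  sumR f (flat_map g l) = sumR (fun a => sumR f (g a)) l.
Proof. induction l; simpl; auto. rewrite sumR_app, IHl; reflexivity. Qed.

Lemma sumR_map {A B} (f : B -> R) (g : A -> B) l : sumR f (map g l) = sumR (fun a => f (g a)) l.
Proof. induction l; simpl; auto. rewrite IHl; reflexivity. Qed.

Lemma sumR_scal {A} (f : A -> R) c l : sumR (fun a => c * f a) l = c * sumR f l.
Proof. induction l; simpl; [lra|]. rewrite IHl; lra. Qed.

Lemma sumR_ext {A} (f g : A -> R) l : (forall a, f a = g a) -> sumR f l = sumR g l.
Proof. intros H; induction l; simpl; auto. rewrite H, IHl; auto. Qed.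

Lemma sumR_le {A} (f g : A -> R) l : (forall a, f a <= g a) -> sumR f l <= sumR g l.
Proof. intros H; induction l; simpl; [lra|]. specialize (H a); lra. Qed.

Lemma sumR_nonneg {A} (f : A -> R) l : (forall a, 0 <= f a) -> 0 <= sumR f l.
Proof. intros H; induction l; simpl; [lra|]. specialize (H a); lra. Qed.

Lemma sum_boxes x B N :
  sumR (fun v => x ^ wt v) (boxes B N) = (sumR (fun a => x ^ Z.abs_nat a) (rng B)) ^ N.
Proof.
  induction N. - simpl; lra.
  - cbn [boxes pow]. rewrite sumR_flat_map.
    rewrite Rmult_comm, <- sumR_scal.
    apply sumR_ext; intro a. rewrite sumR_map.
    rewrite <- IHN, Rmult_comm, <- sumR_scal. apply sumR_ext; intro v. cbn [wt fold_right]. fold (wt v). rewrite pow_add. lra.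
Qed.

Lemma in_rng B a : (Z.abs a <= Z.of_nat B)%Z -> In a (rng B).
Proof.
  intros H. unfold rng. apply in_or_app. destruct (Z_le_gt_dec 0 a).
  - left. apply in_map_iff. exists (Z.to_nat a). split; [lia|]. apply in_seq. lia.
  - right. apply in_map_iff. exists (Z.to_nat (- a - 1)). split; [lia|]. apply in_seq. lia.
Qed.

Lemma in_boxes B N v : length v = N -> (forall a, In a v -> (Z.abs a <= Z.of_nat B)%Z) ->
  In v (boxes B N).
Proof.
  revert v; induction N; intros v Hl Ha; destruct v as [|a v]; simpl in Hl; try lia.
  now left.
  cbn [boxes]. apply in_flat_map. exists a. split. apply in_rng; auto.
  apply Ha; left; auto.
  apply in_map. apply IHN; [lia|]. intros; apply Ha; right; auto.
Qed.

Lemma geom x k : 0 <= x < 1 -> sumR (fun i => x ^ i) (seq 0 k) <= 1 / (1 - x).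
Proof.
  intros Hx.
  assert (E : forall k, sumR (fun i => x ^ i) (seq 0 k) * (1 - x) = 1 - x ^ k).
  { induction k0. simpl; lra.
    rewrite seq_S, sumR_app. simpl. rewrite Rmult_plus_distr_r, IHk0. simpl. ring. }
  specialize (E k). assert (0 <= x ^ k) by (apply pow_le; lra).
  apply (Rmult_le_reg_r (1 - x)); [lra|]. rewrite E. field_simplify; lra.
Qed.

Lemma rng_sum x B : 0 <= x < 1 -> sumR (fun a => x ^ Z.abs_nat a) (rng B) <= 2 / (1 - x).
Proof.
  intros Hx. unfold rng. rewrite sumR_app, !sumR_map.
  assert (H1 : sumR (fun a => x ^ Z.abs_nat (Z.of_nat a)) (seq 0 (S B)) <= 1/(1-x)).
  { rewrite (sumR_ext _ (fun i => x ^ i)). apply geom; auto. intro; rewrite Zabs2Nat.id; auto. }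
  assert (H2 : sumR (fun a => x ^ Z.abs_nat (- Z.of_nat (S a))) (seq 0 B) <= 1/(1-x)).
  { eapply Rle_trans; [|apply (geom x (S B) Hx)].
    rewrite (sumR_ext _ (fun i => x ^ (S i))).
    2:{ intro a. f_equal. lia. }
    cbn [seq]. rewrite <- seq_shift. change (sumR ?f (?a :: ?l)) with (f a + sumR f l). rewrite sumR_map. rewrite pow_O. lra. }
  unfold Rdiv in *. lra.
Qed.

Lemma sumR_remove (f : list Z -> R) a E : (forall v, 0 <= f v) -> In a E ->
  f a + sumR f (remove (list_eq_dec Z.eq_dec) a E) <= sumR f E.
Proof.
  intros Hf; induction E as [|b E IH]; intros Hin; [destruct Hin|].
  simpl. destruct (list_eq_dec Z.eq_dec a b) as [<-|Hne].
  - assert (sumR f (remove (list_eq_dec Z.eq_dec) a E) <= sumR f E).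
    { clear IH Hin. induction E; simpl; [lra|].
      destruct (list_eq_dec Z.eq_dec a a0); simpl; specialize (Hf a0); lra. }
    lra.
  - destruct Hin as [->|Hin]; [congruence|]. simpl. specialize (IH Hin). lra.
Qed.

Lemma sub_sum (f : list Z -> R) L : NoDup L -> (forall v, 0 <= f v) ->
  forall E, incl L E -> sumR f L <= sumR f E.
Proof.
  intros Hnd Hf; induction Hnd as [|a L Hna Hnd IH]; intros E Hinc.
  - simpl. apply sumR_nonneg; auto.
  - simpl. eapply Rle_trans; [|apply (sumR_remove f a E Hf (Hinc a (or_introl eq_refl)))].
    apply Rplus_le_compat_l. apply IH. intros v Hv. apply in_in_remove.
    intro; subst; contradiction. apply Hinc; right; auto.
Qed.

Lemma pow_le_dec x m n : 0 <= x <= 1 -> (m <= n)%nat -> x ^ n <= x ^ m.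
Proof.
  intros Hx Hmn. replace n with (m + (n - m))%nat by lia. rewrite pow_add.
  assert (0 <= x ^ m) by (apply pow_le; lra).
  assert (x ^ (n - m) <= 1).
  { rewrite <- (pow1 (n - m)). apply pow_incr. lra. }
  assert (0 <= x ^ (n - m)) by (apply pow_le; lra). nra.
Qed.

Lemma count_bound x B N W (L : list (list Z)) : 0 < x < 1 -> NoDup L ->
  (forall v, In v L -> length v = N /\ (forall a, In a v -> (Z.abs a <= Z.of_nat B)%Z) /\ (wt v <= W)%nat) ->
  INR (length L) * x ^ W <= (2 / (1 - x)) ^ N.
Proof.
  intros Hx Hnd HL.
  apply Rle_trans with (sumR (fun v => x ^ wt v) L).
  { clear Hnd. induction L as [|v L IH]; [simpl; lra|]. cbn [length].
    rewrite S_INR. destruct (HL v (or_introl eq_refl)) as (_ & _ & Hw).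
    assert (x ^ W <= x ^ wt v) by (apply pow_le_dec; [lra|auto]).
    assert (INR (length L) * x ^ W <= sumR (fun v0 : list Z => x ^ wt v0) L)
      by (apply IH; intros; apply HL; right; auto).
    change (sumR ?f (?a :: ?l)) with (f a + sumR f l). lra. }
  apply Rle_trans with (sumR (fun v => x ^ wt v) (boxes B N)).
  { apply sub_sum; auto. intros; apply pow_le; lra.
    intros v Hv. destruct (HL v Hv) as (H1 & H2 & _). apply in_boxes; auto. }
  rewrite sum_boxes. apply pow_incr. split.
  apply sumR_nonneg; intros; apply pow_le; lra.
  apply rng_sum; lra.
Qed.

Open Scope Z_scope.

Definition Q (w : Z) (dm dM : Z -> Z) (c t : Z) : Prop :=
  (forall u, 0 <= u <= 2*t -> dm u = 0) /\ (forall k, 0 <= k <= t -> dM k = 0) /\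
  (forall u, 1 <= u <= t -> dm (-u) = 0) /\ (forall k, -w <= k <= t - w -> dM k = c) /\
  (forall u, w+1 <= u <= w+t -> dm (-u) = c).

Lemma Q_all (w : Z) (dm dM : Z -> Z) (Hw : 1 <= w)
  (HE1 : forall t s, 1 <= t <= w -> -1 <= s <= 1 -> -(2*w) <= 2*t+s <= 2*w -> -w <= t+s <= w ->
  dM (t+s) = dm (2*t+s) + dm (-t))
  (HE2 : forall t s, 1 <= t <= w -> -1 <= s <= 1 -> -(2*w) <= 2*t-1+s <= 2*w -> -w <= t-w-1+s <= w ->
  dM (t-w-1+s) = dm (2*t-1+s) + dm (-w-t))
  (H0 : dm 0 = 0) (H2 : dm 2 = 0) (HM0 : dM 0 = 0) (HM1 : dM 1 = 0) : forall p : nat, Z.of_nat p + 1 <= w -> Q w dm dM (dm (-(w+1))) (Z.of_nat p + 1).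
Proof.
  set (c := dm (-(w+1))).
  induction p as [|p IH]; intros Hp.
  - simpl. 
    assert (E1 := HE1 1 (-1)). assert (E2 := HE1 1 0).
    assert (E3 := HE2 1 0). assert (E4 := HE2 1 1).
    replace (1 + -1) with 0 in E1 by lia. replace (2*1 + -1) with 1 in E1 by lia.
    replace (1+0) with 1 in E2 by lia. replace (2*1+0) with 2 in E2 by lia.
    replace (1-w-1+0) with (-w) in E3 by lia. replace (2*1-1+0) with 1 in E3 by lia.
    replace (1-w-1+1) with (1-w) in E4 by lia. replace (2*1-1+1) with 2 in E4 by lia.
    replace (-w-1) with (-(w+1)) in E3, E4 by lia. fold c in E3, E4.
    specialize (E1 ltac:(lia) ltac:(lia) ltac:(lia) ltac:(lia)).
    specialize (E2 ltac:(lia) ltac:(lia) ltac:(lia) ltac:(lia)).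
    specialize (E3 ltac:(lia) ltac:(lia) ltac:(lia) ltac:(lia)).
    specialize (E4 ltac:(lia) ltac:(lia) ltac:(lia) ltac:(lia)).
    assert (Hm1 : dm (Z.opp 1) = 0) by lia. assert (Hp1 : dm 1 = 0) by lia.
    repeat split.
    + intros u Hu. assert (u = 0 \/ u = 1 \/ u = 2) as [ -> | [ -> | -> ] ] by lia; auto.
    + intros k Hk. assert (k = 0 \/ k = 1) as [ -> | -> ] by lia; auto.
    + intros u Hu. assert (u = 1) as -> by lia; auto.
    + intros k Hk. assert (k = -w \/ k = 1 - w) as [ -> | -> ] by lia; lia.
    + intros u Hu. assert (u = w + 1) as -> by lia; auto.
  - rewrite Nat2Z.inj_succ in *. set (t := Z.of_nat p + 1) in *.
    assert (Ht : 1 <= t) by lia.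
    destruct (IH ltac:(lia)) as (A & B & C & D & E).
    assert (Ht2 : t + 1 <= w) by lia.
    replace (Z.succ (Z.of_nat p) + 1) with (t+1) by (unfold t; lia). clearbody t. clear IH Hp.
    assert (E1 := HE1 t 1). assert (E2 := HE1 (t+1) (-1)). assert (E3 := HE2 (t+1) 0).
    assert (E4 := HE2 (t+1) (-1)). assert (E5 := HE1 (t+1) 0). assert (E6 := HE2 (t+1) 1).
    specialize (E1 ltac:(lia) ltac:(lia) ltac:(lia) ltac:(lia)).
    specialize (E2 ltac:(lia) ltac:(lia) ltac:(lia) ltac:(lia)).
    specialize (E3 ltac:(lia) ltac:(lia) ltac:(lia) ltac:(lia)).
    specialize (E4 ltac:(lia) ltac:(lia) ltac:(lia) ltac:(lia)).
    specialize (E5 ltac:(lia) ltac:(lia) ltac:(lia) ltac:(lia)).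
    specialize (E6 ltac:(lia) ltac:(lia) ltac:(lia) ltac:(lia)).
    replace (t+1+-1) with t in E2 by lia. replace (2*(t+1)+-1) with (2*t+1) in E2 by lia.
    replace (t+1-w-1+0) with (t-w) in E3 by lia. replace (2*(t+1)-1+0) with (2*t+1) in E3 by lia.
    replace (t+1-w-1+-1) with (t-w-1) in E4 by lia. replace (2*(t+1)-1+-1) with (2*t) in E4 by lia.
    replace (t+1-w-1+1) with (t+1-w) in E6 by lia.
    replace (-w-(t+1)) with (-(w+t+1)) in E3, E4, E6 by lia.
    replace (t + 1 + 0) with (t+1) in E5 by lia.
    replace (2*(t+1)-1+1) with (2*(t+1)+0) in E6 by lia.
    replace (-(t+1)) with (-(t+1)) in E2 by lia.
    rewrite (C t ltac:(lia)) in E1. rewrite (B t ltac:(lia)) in E2.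
    rewrite (D (t-w) ltac:(lia)) in E3. rewrite (D (t-w-1) ltac:(lia)) in E4.
    rewrite (A (2*t) ltac:(lia)) in E4.
    assert (F1 : dm (2*t+1) = 0) by lia.
    assert (F2 : dm (-(t+1)) = 0) by lia.
    assert (F3 : dM (t+1) = 0) by lia.
    assert (F4 : dm (2*(t+1)+0) = 0) by lia.
    assert (F6 : dm (-(w+t+1)) = c) by lia.
    assert (F5 : dM (t+1-w) = c) by lia.
    repeat split.
    + intros u Hu. assert (u <= 2*t \/ u = 2*t+1 \/ u = 2*(t+1)+0) as [ ? | [ -> | -> ] ] by lia; auto. apply A; lia.
    + intros k Hk. assert (k <= t \/ k = t+1) as [ ? | -> ] by lia; auto. apply B; lia.
    + intros u Hu. assert (u <= t \/ u = t+1) as [ ? | -> ] by lia; auto. apply C; lia.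
    + intros k Hk. assert (k <= t - w \/ k = t+1-w) as [ ? | -> ] by lia; auto. apply D; lia.
    + intros u Hu. assert (u <= w+t \/ u = w+t+1) as [ ? | -> ] by lia; auto. apply E; lia.
Qed.

Lemma core (w : Z) (dm dM : Z -> Z) (Hw : 1 <= w)
  (HE1 : forall t s, 1 <= t <= w -> -1 <= s <= 1 -> -(2*w) <= 2*t+s <= 2*w -> -w <= t+s <= w ->
  dM (t+s) = dm (2*t+s) + dm (-t))
  (HE2 : forall t s, 1 <= t <= w -> -1 <= s <= 1 -> -(2*w) <= 2*t-1+s <= 2*w -> -w <= t-w-1+s <= w ->
  dM (t-w-1+s) = dm (2*t-1+s) + dm (-w-t))
  (H0 : dm 0 = 0) (H2 : dm 2 = 0) (HM0 : dM 0 = 0) (HM1 : dM 1 = 0) : (forall i, Z.abs i <= 2*w -> dm i = 0) /\ (forall k, Z.abs k <= w -> dM k = 0).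
Proof.
  destruct (Q_all w dm dM Hw HE1 HE2 H0 H2 HM0 HM1 (Z.to_nat (w - 1)) ltac:(lia)) as (A & B & C & D & E).
  replace (Z.of_nat (Z.to_nat (w - 1)) + 1) with w in * by lia.
  assert (Hc : dm (-(w+1)) = 0) by (rewrite <- (D 0 ltac:(lia)); auto).
  split.
  - intros i Hi. destruct (Z_le_gt_dec 0 i). apply A; lia.
    replace i with (- (-i)) by lia. destruct (Z_le_gt_dec (-i) w). apply C; lia.
    rewrite E; auto; lia.
  - intros k Hk. destruct (Z_le_gt_dec 0 k). apply B; lia. rewrite D; auto; lia.
Qed.

Open Scope Z_scope.

Definition FF (n : nat) (m M : Z -> Z) (t : nat) : list Z :=
  let t := Z.of_nat t in
  [dval n m M (-1) (- t) (2 * t) t; dval n m M 0 (- t) (2 * t) t; dval n m M 1 (- t) (2 * t) t;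
   dval n m M (-1) (- ww n - t) (2 * t - 1) (- ww n - 1 + t);
   dval n m M 0 (- ww n - t) (2 * t - 1) (- ww n - 1 + t);
   dval n m M 1 (- ww n - t) (2 * t - 1) (- ww n - 1 + t)].

Definition code (n : nat) (mM : (Z -> Z) * (Z -> Z)) : list Z :=
  fst mM 0 :: fst mM 2 :: snd mM 0 :: snd mM 1 ::
  flat_map (FF n (fst mM) (snd mM)) (seq 1 (Z.to_nat (ww n))).

Lemma cc_nonneg n : 0 <= cc n.
Proof. unfold cc. Z.to_euclidean_division_equations. lia. Qed.

Lemma prof_bounds n D mM : profile_with_disc n D mM ->
  (forall i, 0 <= fst mM i <= Z.of_nat n) /\ (forall k, 0 <= snd mM k <= Z.of_nat n).
Proof.
  intros ((S & _ & Hm & HM & Hmo & HMo) & _). split.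
  - intros i. destruct (Z_le_gt_dec (Z.abs i) (2 * ww n)) as [Hi|Hi].
    + destruct (Hm i Hi) as ((p & _ & HR & _ & <-) & _).
      destruct HR as (H1 & H2 & H3). unfold hR. unfold cc in *.
      Z.to_euclidean_division_equations. lia.
    + rewrite Hmo by lia. lia.
  - intros k. destruct (Z_le_gt_dec (Z.abs k) (ww n)) as [Hk|Hk].
    + destruct (HM k Hk) as ((p & _ & HL & _ & <-) & _).
      destruct HL as (H1 & H2 & H3). unfold hL. pose proof (cc_nonneg n).
      Z.to_euclidean_division_equations. lia.
    + rewrite HMo by lia. lia.
Qed.

Lemma dval_bound n m M s i j k : (forall i, 0 <= m i <= Z.of_nat n) -> (forall k, 0 <= M k <= Z.of_nat n) ->
  Z.abs (dval n m M s i j k) <= 3 * Z.of_nat n.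
Proof.
  intros Hm HM. unfold dval. destruct (_ && _ && _).
  - pose proof (Hm (j+s)). pose proof (Hm i). pose proof (HM (k+s)). lia.
  - lia.
Qed.

Lemma length_code n mM : length (code n mM) = (6 * Z.to_nat (ww n) + 4)%nat.
Proof.
  unfold code. cbn [length].
  assert (forall l, length (flat_map (FF n (fst mM) (snd mM)) l) = (6 * length l)%nat).
  { induction l; simpl; auto. rewrite IHl. lia. }
  rewrite H, length_seq. lia.
Qed.

Lemma code_entries n D mM : profile_with_disc n D mM -> forall a, In a (code n mM) ->
  Z.abs a <= Z.of_nat (3 * n).
Proof.
  intros Hp. destruct (prof_bounds n D mM Hp) as [Hm HM].
  rewrite Nat2Z.inj_mul. intros a Ha. unfold code in Ha.
  destruct Ha as [<-|[<-|[<-|[<-|Ha]]]]; try (pose proof (Hm 0); pose proof (Hm 2); pose proof (HM 0); pose proof (HM 1); lia).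
  apply in_flat_map in Ha. destruct Ha as (t & _ & Ha).
  unfold FF in Ha. simpl in Ha.
  repeat (destruct Ha as [<-|Ha]; [apply dval_bound; auto|]). destruct Ha.
Qed.

Lemma wt_cons a v : wt (a :: v) = (Z.abs_nat a + wt v)%nat.
Proof. reflexivity. Qed.

Lemma wt_app u v : wt (u ++ v) = (wt u + wt v)%nat.
Proof. induction u; simpl; auto. unfold wt in *; simpl. rewrite IHu. lia. Qed.

Definition gD (n : nat) (m M : Z -> Z) (s : Z) (t : nat) : Z :=
  let t := Z.of_nat t in
  Z.abs (dval n m M s (- t) (2 * t) t) +
  Z.abs (dval n m M s (- ww n - t) (2 * t - 1) (- ww n - 1 + t)).

Lemma wt_flat n m M l : Z.of_nat (wt (flat_map (FF n m M) l)) =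
  fold_right Z.add 0 (map (gD n m M (-1)) l) + fold_right Z.add 0 (map (gD n m M 0) l) +
  fold_right Z.add 0 (map (gD n m M 1) l).
Proof.
  induction l as [|t l IH]; [reflexivity|].
  cbn [flat_map map fold_right]. rewrite wt_app, Nat2Z.inj_add, IH.
  unfold FF, gD. rewrite !wt_cons. unfold wt at 1. cbn [fold_right].
  rewrite !Nat2Z.inj_add, !Zabs2Nat.id_abs. lia.
Qed.

Lemma code_wt n D mM : profile_with_disc n D mM -> (wt (code n mM) <= 4 * n + 3 * D)%nat.
Proof.
  intros Hp. destruct (prof_bounds n D mM Hp) as [Hm HM]. destruct Hp as [_ HD].
  unfold discrepancy in HD.
  assert (E : forall s, Dsum n (fst mM) (snd mM) s = fold_right Z.add 0 (map (gD n (fst mM) (snd mM) s) (seq 1 (Z.to_nat (ww n))))).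
  { reflexivity. }
  rewrite !E in HD.
  apply Nat2Z.inj_le. unfold code. rewrite !wt_cons, !Nat2Z.inj_add, !Zabs2Nat.id_abs, wt_flat.
  pose proof (Hm 0). pose proof (Hm 2). pose proof (HM 0). pose proof (HM 1). lia.
Qed.

Open Scope Z_scope.

Lemma app_inv_len {A} (u1 u2 v1 v2 : list A) : length u1 = length u2 -> u1 ++ v1 = u2 ++ v2 ->
  u1 = u2 /\ v1 = v2.
Proof.
  revert u2; induction u1 as [|a u1 IH]; intros [|b u2] Hl H; simpl in *; try lia; auto.
  injection H as -> H. destruct (IH u2 ltac:(lia) H) as [-> ->]. auto.
Qed.

Lemma list6 {A} (a1 a2 a3 a4 a5 a6 b1 b2 b3 b4 b5 b6 : A) :
  [a1;a2;a3;a4;a5;a6] = [b1;b2;b3;b4;b5;b6] ->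
  a1 = b1 /\ a2 = b2 /\ a3 = b3 /\ a4 = b4 /\ a5 = b5 /\ a6 = b6.
Proof. intros H; injection H; auto 10. Qed.

Lemma flat_FF n m1 M1 m2 M2 l : flat_map (FF n m1 M1) l = flat_map (FF n m2 M2) l ->
  forall t, In t l -> FF n m1 M1 t = FF n m2 M2 t.
Proof.
  induction l as [|a l IH]; intros H t Ht; [destruct Ht|].
  cbn [flat_map] in H. apply app_inv_len in H; [|reflexivity]. destruct H as [H1 H2].
  destruct Ht as [<-|Ht]; auto.
Qed.

Lemma dval_eq_dom n m1 M1 m2 M2 s i j k :
  dval n m1 M1 s i j k = dval n m2 M2 s i j k ->
  Z.abs i <= 2 * ww n -> Z.abs (j+s) <= 2 * ww n -> Z.abs (k+s) <= ww n ->
  M1 (k+s) - M2 (k+s) = (m1 (j+s) - m2 (j+s)) + (m1 i - m2 i).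
Proof.
  unfold dval, in_dom_m, in_dom_M. intros H Hi Hj Hk.
  apply Z.leb_le in Hi, Hj, Hk. rewrite Hi, Hj, Hk in H. simpl in H. lia.
Qed.

Lemma code_inj n D p1 p2 : profile_with_disc n D p1 -> profile_with_disc n D p2 ->
  code n p1 = code n p2 -> p1 = p2.
Proof.
  destruct p1 as [m1 M1], p2 as [m2 M2].
  intros ((S1 & _ & _ & _ & Hmo1 & HMo1) & _) ((S2 & _ & _ & _ & Hmo2 & HMo2) & _) Hc.
  unfold code in Hc. cbn [fst snd] in *.
  injection Hc as E0 E2 F0 F1 Hf.
  pose proof (flat_FF _ _ _ _ _ _ Hf) as HF.
  set (w := ww n) in *.
  assert (Hw0 : 0 <= w) by (unfold w, ww; Z.to_euclidean_division_equations; lia).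
  assert (Hin : (forall i, Z.abs i <= 2*w -> m1 i - m2 i = 0) /\ (forall k, Z.abs k <= w -> M1 k - M2 k = 0)).
  { destruct (Z_le_gt_dec 1 w) as [Hw|Hw].
    - apply (core w (fun i => m1 i - m2 i) (fun k => M1 k - M2 k) Hw); try lia.
      + intros t s Ht Hs Hj Hk.
        assert (Ht' : In (Z.to_nat t) (seq 1 (Z.to_nat w))) by (apply in_seq; lia).
        specialize (HF _ Ht'). unfold FF in HF. rewrite Z2Nat.id in HF by lia.
        apply list6 in HF. destruct HF as (G1 & G2 & G3 & G4 & G5 & G6).
        assert (s = -1 \/ s = 0 \/ s = 1) as [ -> | [ -> | -> ] ] by lia;
          first [ apply (dval_eq_dom n m1 M1 m2 M2 _ _ _ _ G1)
                | apply (dval_eq_dom n m1 M1 m2 M2 _ _ _ _ G2)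
                | apply (dval_eq_dom n m1 M1 m2 M2 _ _ _ _ G3) ]; lia.
      + intros t s Ht Hs Hj Hk.
        assert (Ht' : In (Z.to_nat t) (seq 1 (Z.to_nat w))) by (apply in_seq; lia).
        specialize (HF _ Ht'). unfold FF in HF. rewrite Z2Nat.id in HF by lia.
        apply list6 in HF. destruct HF as (G1 & G2 & G3 & G4 & G5 & G6). fold w in G4, G5, G6.
        replace (t - w - 1 + s) with ((- w - 1 + t) + s) by lia.
        replace (2 * t - 1 + s) with ((2 * t - 1) + s) by lia.
        assert (s = -1 \/ s = 0 \/ s = 1) as [ -> | [ -> | -> ] ] by lia;
          first [ apply (dval_eq_dom n m1 M1 m2 M2 _ _ _ _ G4)
                | apply (dval_eq_dom n m1 M1 m2 M2 _ _ _ _ G5)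
                | apply (dval_eq_dom n m1 M1 m2 M2 _ _ _ _ G6) ]; lia.
    - split.
      + intros i Hi. assert (i = 0) as -> by lia. lia.
      + intros k Hk. assert (k = 0) as -> by lia. lia. }
  destruct Hin as [Hm HM].
  f_equal; apply functional_extensionality.
  - intros i. destruct (Z_le_gt_dec (Z.abs i) (2 * w)). specialize (Hm i l); lia.
    rewrite Hmo1, Hmo2 by lia. reflexivity.
  - intros k. destruct (Z_le_gt_dec (Z.abs k) w). specialize (HM k l); lia.
    rewrite HMo1, HMo2 by lia. reflexivity.
Qed.

Open Scope Z_scope.

Theorem mainTheorem19 :
  forall eps : R, (0 < eps)%R ->
  exists C : R,
  forall (n : nat) (D : nat), (1 <= n)%nat ->
  forall l : list ((Z -> Z) * (Z -> Z)),
    NoDup l ->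
    (forall mM, In mM l -> profile_with_disc n D mM) ->
    (INR (length l) <= Rpower 2 (eps * INR D + C * INR n))%R.
Proof.
  intros eps Heps.
  set (x := exp (- eps / 3 * ln 2)).
  assert (Hln2 : (0 < ln 2)%R) by (pose proof ln_lt_2; lra).
  assert (Hx0 : (0 < x)%R) by apply exp_pos.
  assert (Hx1 : (x < 1)%R).
  { unfold x. rewrite <- exp_0. apply exp_increasing. 
    assert (0 < eps / 3 * ln 2)%R by (apply Rmult_lt_0_compat; lra). lra. }
  set (K := (2 / (1 - x))%R).
  assert (HK : (1 <= K)%R).
  { unfold K. apply (Rmult_le_reg_r (1 - x)); [lra|]. unfold Rdiv.
    rewrite Rmult_assoc, Rinv_l by lra. lra. }
  exists (4 * eps / 3 + 10 * ln K / ln 2)%R.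
  intros n D Hn l Hnd Hl.
  set (L := map (code n) l).
  set (W := (4 * n + 3 * D)%nat).
  set (N := (6 * Z.to_nat (ww n) + 4)%nat).
  assert (HNd : NoDup L).
  { apply NoDup_map_NoDup_ForallPairs; auto. intros a b Ha Hb.
    apply (code_inj n D); apply Hl; auto. }
  assert (Hc := count_bound x (3 * n) N W L (conj Hx0 Hx1) HNd).
  assert (Hlen : length L = length l) by apply length_map.
  rewrite Hlen in Hc.
  assert (Hb : (INR (length l) * x ^ W <= K ^ N)%R).
  { apply Hc. intros v Hv. unfold L in Hv. apply in_map_iff in Hv.
    destruct Hv as (mM & <- & HmM). specialize (Hl _ HmM).
    split; [apply length_code|]. split.
    - apply (code_entries n D); auto.
    - apply (code_wt n D); auto. }
  assert (HN : (N <= 10 * n)%nat).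
  { unfold N. assert (4 * ww n <= 2 * Z.of_nat n)%Z by (unfold ww; Z.to_euclidean_division_equations; lia).
    lia. }
  assert (HKN : (K ^ N <= K ^ (10 * n))%R) by (apply Rle_pow; auto).
  assert (HxW : (x ^ W = exp (- (INR W * (eps / 3 * ln 2))))%R).
  { rewrite <- Rpower_pow by auto. unfold Rpower, x. rewrite ln_exp. replace (INR W * (- eps / 3 * ln 2))%R with (- (INR W * (eps / 3 * ln 2)))%R by (unfold Rdiv; ring); reflexivity. }
  assert (HKp : (K ^ (10 * n) = exp (INR (10 * n) * ln K))%R).
  { rewrite <- Rpower_pow by lra. reflexivity. }
  assert (Hfin : (INR (length l) <= exp (INR (10 * n) * ln K) * exp (INR W * (eps / 3 * ln 2)))%R).
  { rewrite HxW in Hb. rewrite <- HKp.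
    assert (E : (exp (- (INR W * (eps / 3 * ln 2))) * exp (INR W * (eps / 3 * ln 2)) = 1)%R).
    { rewrite <- exp_plus. replace (_ + _)%R with 0%R by ring. apply exp_0. }
    assert (0 < exp (INR W * (eps / 3 * ln 2)))%R by apply exp_pos.
    apply Rle_trans with (INR (length l) * exp (- (INR W * (eps / 3 * ln 2))) * exp (INR W * (eps / 3 * ln 2)))%R.
    { rewrite Rmult_assoc, E. lra. }
    apply Rmult_le_compat_r; lra. }
  eapply Rle_trans; [exact Hfin|]. rewrite <- exp_plus. unfold Rpower.
  right. f_equal. unfold W. rewrite !mult_INR, !plus_INR, !mult_INR. simpl INR.
  field. lra.
Qed.
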